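(* For every integer $n\ge 1$, the Fermat number $F_n=2^{2^{n-1}}+1$ is primover to base $2$.
   Context: For an integer $a>1$ and an odd integer $n>1$ with $\gcd(a,n)=1$: $h_a(n)$ denotes the multiplicative order of $a$ modulo $n$. A cyclotomic coset of $a$ modulo $n$ is a set of the form $\{\, s a^j \bmod n : j\ge 0\,\}$ with $s\in\{1,\dots,n-1\}$; these cosets partition $\{1,\dots,n-1\}$, and $r_a(n)$ denotes the number of distinct cyclotomic cosets of $a$ modulo $n$. An odd composite number $n$ coprime to $a$ is called an overpseudoprime to base $a$ if $n=r_a(n)\,h_a(n)+1$. An integer $N>1$ is called primover to base $a$ if it is either prime or an overpseudoprime to base $a$. *)

(* Defs.v *)
From mathcomp Require Import all_boot.
Set Implicit Arguments. Unset Strict Implicit. Unset Printing Implicit Defensive.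

(* The search ranges over k in 1..n, which is enough when
   gcd(a,n) = 1 and n > 1 (then h_a(n) <= phi(n) < n). *)
Definition mult_order (a n : nat) : nat :=
  (find (fun k => a ^ k.+1 %% n == 1 %% n) (iota 0 n)).+1.

(* Ranging j over 0..n-1 yields all values, since the sequence (a^j mod n)
   is eventually periodic with preperiod + period <= n (pigeonhole). *)
Definition cyc_coset (a n s : nat) : {set 'I_n} :=
  [set i : 'I_n | [exists j : 'I_n, nat_of_ord i == (s * a ^ j) %% n]].

Definition num_cosets (a n : nat) : nat :=
  #|[set cyc_coset a n (nat_of_ord s) | s in [set s : 'I_n | 0 < nat_of_ord s]]|.

Definition overpseudoprime (a n : nat) : bool :=
  [&& odd n, 1 < n, ~~ prime n, coprime a n &
      n == num_cosets a n * mult_order a n + 1].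

Definition primover (a N : nat) : bool :=
  (1 < N) && (prime N || overpseudoprime a N).

(* Main.v *)
Require Import Defs.
From mathcomp Require Import all_boot.
Set Implicit Arguments. Unset Strict Implicit.

Section Core.
Variables (N h : nat).
Hypotheses (Nodd : odd N) (N1 : 1 < N) (h0 : 0 < h) (hN : h <= N)
  (Hd : forall d k, 1 < d -> d %| N -> 2 ^ k %% d = 1 %% d -> h %| k)
  (H2h : 2 ^ h %% N = 1).

Lemma N0 : 0 < N. Proof. exact: ltnW. Qed.

Lemma powmod j : 2 ^ j %% N = 2 ^ (j %% h) %% N.
Proof.
rewrite {1}(divn_eq j h) expnD [j %/ h * h]mulnC expnM -modnMml -(modnXm _ N (2 ^ h)) H2h exp1n.
by rewrite (modn_small N1) mul1n.
Qed.

Lemma xpowmod (x j : nat) : x * 2 ^ j %% N = x * 2 ^ (j %% h) %% N.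
Proof. by rewrite -modnMmr powmod modnMmr. Qed.

Lemma memC (x i : 'I_N) :
  (i \in cyc_coset 2 N x) <-> exists j, (i : nat) = x * 2 ^ j %% N.
Proof.
rewrite inE; split.
  by case/existsP=> j /eqP ->; exists j.
case=> j ->; apply/existsP.
have lt : j %% h < N by apply: leq_trans (ltn_pmod _ h0) hN.
by exists (Ordinal lt); rewrite /= xpowmod.
Qed.

Lemma Ctrans (x y z : 'I_N) : y \in cyc_coset 2 N x -> z \in cyc_coset 2 N y ->
  z \in cyc_coset 2 N x.
Proof.
move=> /memC [a ea] /memC [b eb]; apply/memC; exists (a + b).
by rewrite eb ea modnMml expnD mulnA.
Qed.

Lemma Csym (x y : 'I_N) : y \in cyc_coset 2 N x -> x \in cyc_coset 2 N y.
Proof.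
move=> /memC [a ea]; apply/memC; exists (h - a %% h).
rewrite ea modnMml -mulnA -expnD xpowmod.
have -> : (a + (h - a %% h)) %% h = 0.
  rewrite {1}(divn_eq a h) -addnA subnKC; last exact: ltnW (ltn_pmod _ h0).
  by rewrite -{3}(mul1n h) -mulnDl modnMl.
by rewrite expn0 muln1 modn_small.
Qed.

Lemma Crefl (x : 'I_N) : x \in cyc_coset 2 N x.
Proof. by apply/memC; exists 0; rewrite muln1 modn_small. Qed.

Lemma Ceq (x y : 'I_N) : y \in cyc_coset 2 N x ->
  cyc_coset 2 N y = cyc_coset 2 N x.
Proof.
move=> yx; apply/setP=> z; apply/idP/idP => H; first exact: Ctrans H.
exact: Ctrans (Csym yx) H.
Qed.

Lemma inj_core (x a b : nat) : 0 < x < N -> a < b < h ->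
  x * 2 ^ a %% N = x * 2 ^ b %% N -> False.
Proof.
case/andP=> x0 xN /andP [ab bh] E.
set c := b - a.
have c0 : 0 < c by rewrite subn_gt0.
have ch : c < h by apply: leq_ltn_trans (leq_subr _ _) bh.
have eb : x * 2 ^ b = x * 2 ^ a * 2 ^ c by rewrite -mulnA -expnD subnKC // ltnW.
have dv : N %| 2 ^ a * (x * (2 ^ c - 1)).
  have : (x * 2 ^ b == x * 2 ^ a %[mod N]) by rewrite E.
  rewrite eqn_mod_dvd; last by rewrite eb leq_pmulr // expn_gt0.
  by rewrite eb -{2}(muln1 (x * 2 ^ a)) -mulnBr [x * 2 ^ a]mulnC -mulnA.
rewrite Gauss_dvdr in dv; last by apply: coprimeXr; rewrite coprimen2.
set y := 2 ^ c - 1 in dv.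
have [cop|ncop] := boolP (coprime y N).
  rewrite Gauss_dvdl in dv; last by rewrite coprime_sym.
  by move: (dvdn_leq x0 dv); rewrite leqNgt xN.
have g1 : 1 < gcdn y N.
  rewrite ltn_neqAle eq_sym ncop /= gcdn_gt0 N0 orbT //.
have : h %| c.
  apply: (Hd g1 (dvdn_gcdr _ _)); apply/eqP.
  rewrite eqn_mod_dvd ?expn_gt0 //; exact: dvdn_gcdl.
by move/(dvdn_leq c0); rewrite leqNgt ch.
Qed.

Lemma card_C (x : 'I_N) : 0 < x -> #|cyc_coset 2 N x| = h.
Proof.
move=> x0.
pose f (j : 'I_h) : 'I_N := Ordinal (ltn_pmod (x * 2 ^ j) N0).
have -> : cyc_coset 2 N x = [set f j | j : 'I_h].
  apply/setP=> i; apply/idP/imsetP.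
    move/memC=> [j ej]; have lt : j %% h < h by apply: ltn_pmod.
    by exists (Ordinal lt) => //; apply: val_inj; rewrite /= ej xpowmod.
  by case=> j _ ->; apply/memC; exists j.
rewrite card_imset ?card_ord //.
move=> a b /(congr1 val) /= E; apply: val_inj => /=.
have xx : 0 < x < N by rewrite x0 ltn_ord.
case: (ltngtP a b) => // ab.
  by case: (inj_core xx (introT andP (conj ab (ltn_ord b))) E).
by case: (inj_core xx (introT andP (conj ab (ltn_ord a))) (esym E)).
Qed.

Lemma order_eq : mult_order 2 N = h.
Proof.
have key k : (2 ^ k %% N == 1 %% N) = (h %| k).
  apply/eqP/idP; first exact: Hd N1 (dvdnn N).
  by move/dvdnP=> [q ->]; rewrite powmod modnMl.
rewrite /mult_order.
set p := (fun k => _).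
have hh : has p (iota 0 N).
  apply/hasP; exists h.-1; first by rewrite mem_iota add0n (leq_trans _ hN) // ltn_predL.
  by rewrite /p prednK // key.
have fi : find p (iota 0 N) < N by rewrite -{2}(size_iota 0 N) -has_find.
have := nth_find 0 hh; rewrite nth_iota // add0n /p key => hi.
have le1 : h <= (find p (iota 0 N)).+1 by apply: dvdn_leq.
apply/eqP; rewrite eqn_leq le1 andbT ltnNge; apply/negP => lt.
have := @before_find _ 0 p (iota 0 N) h.-1.
rewrite -ltnS prednK // => /(_ lt).
by rewrite nth_iota ?add0n /p ?prednK ?key ?dvdnn // (leq_trans _ hN) // ltn_predL.
Qed.

Lemma count_eq : N = num_cosets 2 N * mult_order 2 N + 1.
Proof.
rewrite order_eq /num_cosets.
set S := [set s : 'I_N | 0 < nat_of_ord s].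
set P := [set _ | s in S].
have CS (x y : 'I_N) : x \in S -> y \in cyc_coset 2 N x -> y \in S.
  move=> xS yx; move: xS; rewrite inE => x0; have /memC [j ej] := Csym yx; rewrite inE; rewrite lt0n; apply/eqP => y0.
  by move: x0; rewrite ej y0 mul0n mod0n.
have eP : P = equivalence_partition (fun x y : 'I_N => y \in cyc_coset 2 N x) S.
  apply: eq_in_imset => x xS; apply/setP => y; rewrite [RHS]inE.
  by apply/idP/andP => [H|[]//]; split => //; apply: CS H.
have part : partition P S.
  rewrite eP; apply: equivalence_partitionP => x y z _ _ _; split.
    exact: Crefl.
  by move=> xy; rewrite (Ceq xy).
have cardP : {in P, forall A : {set 'I_N}, #|A| = h}.
  move=> A /imsetP [s]; rewrite inE => s0 ->; exact: card_C.
rewrite -(card_uniform_partition cardP part).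
have cS : ~: S = [set Ordinal N0].
  apply/setP => i; rewrite !inE -leqNgt leqn0 -val_eqE.
  by [].
have := cardsC S; rewrite cS cards1 card_ord => e.
by rewrite e.
Qed.

End Core.
From Stdlib Require Import Lia.
Lemma sq_mod (t : nat) : 0 < t -> t * t = (t - 1) * (t + 1) + 1.
Proof.
case: t => // s _; rewrite subn1 /= -!multE -!plusE; lia.
Qed.

Lemma fermat_Hd (k : nat) :
  forall d k', 1 < d -> d %| 2 ^ (2 ^ k) + 1 -> 2 ^ k' %% d = 1 %% d -> 2 ^ k.+1 %| k'.
Proof.
move=> d k' d1 dN e.
set m := 2 ^ k in dN *; set h := 2 ^ k.+1.
have dodd : odd d.
  by apply: (dvdn_odd dN); rewrite addn1 /= oddX orbF -lt0n /m expn_gt0.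
have d1' : 1 %% d = 1 by rewrite modn_small.
rewrite d1' in e.
have hm : h = m * 2 by rewrite /h expnS mulnC.
have Hh : 2 ^ h %% d = 1.
  rewrite -(modn_dvdm _ dN) hm expnM -mulnn sq_mod ?expn_gt0 //.
  rewrite modnMDl (@modn_small 1 (2 ^ m + 1)) //; by rewrite addn1 ltnS expn_gt0.
have h0 : 0 < h by rewrite expn_gt0.
have pw1 a b : 2 ^ a %% d = 1 -> 2 ^ (b * a) %% d = 1.
  move=> ea; rewrite mulnC expnM -modnXm ea exp1n //.
case: (egcdnP k' h0) => kh kk E _.
set g := gcdn h k' in E.
have eg : 2 ^ g %% d = 1.
  have := pw1 _ kh Hh; rewrite E expnD -modnMml pw1 // mul1n //.
have : g %| 2 ^ k.+1 by apply: dvdn_gcdl.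
case/(dvdn_pfactor _ _ (isT : prime 2)) => j jle gj.
have [jk|jk|jeq] := ltngtP j k.+1; last by move: (dvdn_gcdr h k'); rewrite -/g gj jeq.
  2: by rewrite ltnNge jle in jk.
have : g %| m by rewrite gj /m dvdn_exp2l.
case/dvdnP => q eq.
have em : 2 ^ m %% d = 1 by rewrite eq pw1.
have : (2 ^ m + 1) %% d = 0 by apply/eqP; exact: dN.
rewrite -modnDml em modn_small //.
by rewrite addn1 ltn_neqAle d1 andbT; apply/negP => /eqP d2; rewrite -d2 in dodd.
Qed.

Theorem theorem4 (n : nat) (hn : 1 <= n) :
  primover 2 (2 ^ (2 ^ (n - 1)) + 1).
Proof.
case: n hn => // k _; rewrite subn1 /=.
set m := 2 ^ k.
have m0 : 0 < m by rewrite expn_gt0.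
have N1 : 1 < 2 ^ m + 1 by rewrite addn1 ltnS expn_gt0.
have Nodd : odd (2 ^ m + 1) by rewrite addn1 /= oddX orbF -lt0n.
rewrite /primover N1 /=.
case: (boolP (prime _)) => //= np.
rewrite /overpseudoprime Nodd N1 np coprime2n Nodd /=.
apply/eqP; apply: (count_eq Nodd N1 (h := 2 ^ k.+1)).
- by rewrite expn_gt0.
- rewrite (leq_trans _ (leq_addr _ _)) // leq_exp2l // /m.
  exact: ltn_expl.
- exact: fermat_Hd.
- have hm : 2 ^ k.+1 = m * 2 by rewrite /m expnS mulnC.
  rewrite hm expnM -mulnn sq_mod ?expn_gt0 // modnMDl modn_small //.
Qed.
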